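(* Let $n$ be a positive integer. Then in the ring $\mathbb{Z}[x,q]$ (polynomials in $x$ whose coefficients are polynomials in $q$; congruences are modulo the indicated polynomials in $q$, coefficientwise in $x$), the following hold: $$(1+q)^2\sum_{k=0}^{n-1}q^{2k}[k+1]_{q^2}\,g_k(x;q^2)\equiv \sum_{k=0}^{n-1}q^{2k}g_k(x;q^2)\pmod{\prod_{\substack{d\mid n\\ d>1\text{ odd}}}\Phi_d(q)},$$ $$\sum_{k=0}^{n-1}q^{k}g_k(x;q)\equiv 0\pmod{\prod_{\substack{d\mid n\\ d\text{ even}}}\Phi_d(q)},$$ $$\sum_{j=0}^{n-1}x^j[j+1]_{q^2}{2j\brack j}_q\sum_{k=j}^{n-1}q^k{k\brack j}_q{k+1\brack j+1}_q\equiv 0\pmod{\prod_{\substack{d\mid n\\ d>2\text{ even}}}\Phi_d(q)}.$$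
   Context: The $q$-binomial coefficients are ${n\brack k}_q=\prod_{i=1}^{k}\frac{1-q^{n-k+i}}{1-q^i}$ for $0\le k\le n$ and $0$ otherwise. The $q$-integer is $[n]_q=\frac{1-q^n}{1-q}$. $\Phi_d(q)$ denotes the $d$-th cyclotomic polynomial. The $q$-Sun polynomials are $g_n(x;q)=\sum_{k=0}^{n}{n\brack k}_q^2{2k\brack k}_q x^k$. An empty product of cyclotomic polynomials equals $1$. *)

(* Defs.v *)
(* Z[x,q] is modelled as {poly {poly int}}: outer variable x,
   coefficients in Z[q] = {poly int} with q = 'X. *)
From HB Require Import structures.
From mathcomp Require Import all_boot all_order all_algebra all_field.
Set Implicit Arguments. Unset Strict Implicit. Unset Printing Implicit Defensive.
Import GRing.Theory.
Local Open Scope ring_scope.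

Fixpoint qbinom (R : comNzRingType) (q : R) (n k : nat) {struct n} : R :=
  match n, k with
  | _, 0%N => 1
  | 0%N, _.+1 => 0
  | n'.+1, k'.+1 => qbinom q n' k' + q ^+ k'.+1 * qbinom q n' k'.+1
  end.

Definition qint (R : comNzRingType) (q : R) (n : nat) : R :=
  \sum_(i < n) q ^+ i.

(* The q-Sun polynomial g_n(x;q) = sum_k [n,k]_q^2 [2k,k]_q x^k, with q an
   element of Z[q] (e.g. 'X or 'X^2). *)
Definition gSun (q : {poly int}) (n : nat) : {poly {poly int}} :=
  \sum_(k < n.+1) ((qbinom q n k) ^+ 2 * qbinom q k.*2 k)%:P * 'X ^+ k.

Definition pcongr (M : {poly int}) (P Q : {poly {poly int}}) : Prop :=
  forall i : nat, exists r : {poly int}, P`_i - Q`_i = r * M.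

(* Main.v *)
Require Import Defs.
From HB Require Import structures.
From mathcomp Require Import all_boot all_order all_algebra all_field.
From mathcomp Require Import zify ring.
Import GRing.Theory.
Local Open Scope ring_scope.
Set Implicit Arguments. Unset Strict Implicit. Unset Printing Implicit Defensive.

Lemma qb_n0 (R : comNzRingType) (q : R) n : qbinom q n 0 = 1.
Proof. by case: n. Qed.

Lemma qb_SS (R : comNzRingType) (q : R) n k :
  qbinom q n.+1 k.+1 = qbinom q n k + q ^+ k.+1 * qbinom q n k.+1.
Proof. by []. Qed.

Lemma qb_gt (R : comNzRingType) (q : R) n k : (n < k)%N -> qbinom q n k = 0.
Proof.
elim: n k => [|n IH] [|k] //= H.
by rewrite !IH ?mulr0 ?addr0 //; lia.
Qed.

Lemma qb_nn (R : comNzRingType) (q : R) n : qbinom q n n = 1.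
Proof. by elim: n => //= n ->; rewrite qb_gt ?mulr0 ?addr0. Qed.

Definition qfact (R : comNzRingType) (q : R) j := \prod_(i < j) (1 - q ^+ i.+1).

Lemma qb_fall (R : comNzRingType) (q : R) b j :
  qbinom q b j * qfact q j = \prod_(i < j) (1 - q ^+ (b - i)).
Proof.
rewrite /qfact; elim: b j => [|b IH] [|k].
- by rewrite !big_ord0 mulr1.
- by rewrite /= mul0r big_ord_recl /= subn0 expr0 subrr mul0r.
- by rewrite !big_ord0 mulr1.
rewrite qb_SS big_ord_recr /=.
have E1 := IH k.
have E2 := IH k.+1; rewrite !big_ord_recr /= in E2.
rewrite big_ord_recl /= subn0.
have Hr : \prod_(i < k) (1 - q ^+ (b.+1 - bump 0 i)) = \prod_(i < k) (1 - q ^+ (b - i)).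
  by apply: eq_bigr => i _; rewrite /bump /= add1n subSS.
rewrite Hr.
set A := qbinom q b k in E1 *; set B := qbinom q b k.+1 in E2 *.
set P := \prod_(i < k) (1 - q ^+ i.+1) in E1 E2 *.
set F := \prod_(i < k) (1 - q ^+ (b - i)) in E1 E2 *.
transitivity ((A * P) * (1 - q ^+ k.+1) + q ^+ k.+1 * (B * (P * (1 - q ^+ k.+1)))); first by ring.
rewrite E1 E2.
case: (leqP k b) => Hkb.
- have E : q ^+ b.+1 = q ^+ k.+1 * q ^+ (b - k) by rewrite -exprD; congr (_ ^+ _); lia.
  rewrite E; ring.
- have Z : F = 0.
    by rewrite /F (bigD1 (Ordinal Hkb)) //= subnn expr0 subrr mul0r.
  by rewrite Z !mul0r mulr0 !add0r mulr0.
Qed.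

Lemma rmorph_qbinom (R S : comNzRingType) (f : {rmorphism R -> S}) q n k :
  f (qbinom q n k) = qbinom (f q) n k.
Proof.
elim: n k => [|n IH] [|k] //=; rewrite ?rmorph1 ?rmorph0 //.
by rewrite rmorphD rmorphM rmorphXn !IH.
Qed.

Lemma rmorph_qint (R S : comNzRingType) (f : {rmorphism R -> S}) q n :
  f (qint q n) = qint (f q) n.
Proof. by rewrite /qint rmorph_sum; apply: eq_bigr => i _; rewrite rmorphXn. Qed.

Local Notation pZtoC := (map_poly (intr : int -> algC)).

Lemma root_PhiC d x : (0 < d)%N -> root (pZtoC 'Phi_d) x = d.-primitive_root x.
Proof.
move=> d0; have [z0 pz0] := C_prim_root_exists d0.
by rewrite (Cintr_Cyclotomic pz0) (root_cyclotomic pz0).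
Qed.

Lemma prim_uniq d d' (x : algC) : d.-primitive_root x -> d'.-primitive_root x -> d = d'.
Proof.
move=> p1 p2; apply/eqP; rewrite eqn_dvd.
by rewrite (prim_order_dvd p1) (prim_expr_order p2) (prim_order_dvd p2) (prim_expr_order p1) !eqxx.
Qed.

Lemma PhiC_dvd d (D : {poly algC}) : (0 < d)%N ->
  (forall z, d.-primitive_root z -> D.[z] = 0) -> pZtoC 'Phi_d %| D.
Proof.
move=> d0 HD; have [z0 pz0] := C_prim_root_exists d0.
rewrite (Cintr_Cyclotomic pz0) /cyclotomic.
pose s := [seq z0 ^+ (val k) | k <- enum (fun k : 'I_d => coprime k d)].
have -> : \prod_(k < d | coprime k d) ('X - (z0 ^+ k)%:P) = \prod_(y <- s) ('X - y%:P).
  by rewrite big_map big_filter.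
apply: uniq_roots_dvdp.
  apply/allP => y /mapP [k]; rewrite mem_enum => ck ->.
  by apply/rootP; apply: HD; rewrite prim_root_exp_coprime.
rewrite uniq_rootsE map_inj_in_uniq ?enum_uniq // => i j _ _ /eqP.
rewrite (eq_prim_root_expr pz0) !modn_small ?ltn_ord // => /eqP; exact: val_inj.
Qed.

Lemma prod_PhiC_dvd (ds : seq nat) (D : {poly algC}) : uniq ds ->
  (forall d, d \in ds -> (0 < d)%N /\ forall z, d.-primitive_root z -> D.[z] = 0) ->
  \prod_(d <- ds) pZtoC 'Phi_d %| D.
Proof.
elim: ds => [|d ds IH] /=; first by rewrite big_nil dvd1p.
move=> /andP [nd uds] H; rewrite big_cons Gauss_dvdp.
  have [d0 Hd] := H d (mem_head _ _).
  rewrite PhiC_dvd // IH // => d' Hd'; apply: H; by rewrite inE Hd' orbT.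
apply: Pdiv.ClosedField.root_coprimep => x.
have [d0 _] := H d (mem_head _ _).
rewrite root_PhiC // => px; rewrite horner_prod prodf_seq_neq0.
apply/allP => d' Hd'; apply/implyP => _.
have [d'0 _] : (0 < d')%N /\ _ := H d' (ltac:(by rewrite inE Hd' orbT)).
rewrite -rootE root_PhiC //; apply/negP => px'.
by move: nd; rewrite (prim_uniq px px') Hd'.
Qed.

Lemma transfer (P : pred nat) n (D : {poly int}) : (0 < n)%N ->
  (forall d z, (d %| n)%N -> P d -> d.-primitive_root z -> (pZtoC D).[z] = 0) ->
  exists r, D = r * \prod_(d <- divisors n | P d) 'Phi_d.
Proof.
move=> n0 HD; set M := \prod_(d <- divisors n | P d) 'Phi_d.
have monM : M \is monic by apply: monic_prod => d _; apply: Cyclotomic_monic.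
have dvC : pZtoC M %| pZtoC D.
  rewrite /M rmorph_prod -big_filter; apply: prod_PhiC_dvd.
    by rewrite filter_uniq // divisors_uniq.
  move=> d; rewrite mem_filter -dvdn_divisors // => /andP [Pd dn].
  split; last by move=> z; apply: HD.
  by apply: dvdn_gt0 dn; exact: n0.
exists (D %/ M).
have E := Pdiv.IdomainMonic.divp_eq monM D.
suff R0 : D %% M = 0 by rewrite {1}E R0 addr0.
have M0 : M != 0 by apply: monic_neq0.
have sz := ltn_modpN0 D M0.
have E' : pZtoC D = pZtoC (D %/ M) * pZtoC M + pZtoC (D %% M).
  by rewrite {1}E rmorphD rmorphM.
have dv2 : pZtoC M %| pZtoC (D %% M).
  by move: dvC; rewrite E' dvdp_addr // dvdp_mull.
apply/eqP; apply: contraTT sz => nz.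
have nzC : pZtoC (D %% M) != 0 by rewrite map_poly_eq0_id0 ?lead_coef_eq0 // intr_eq0 lead_coef_eq0.
have := dvdp_leq nzC dv2.
by rewrite !size_map_inj_poly //; [rewrite leqNgt|exact: intr_inj|exact: intr_inj].
Qed.

Lemma prim_neq0 d (z : algC) : d.-primitive_root z -> z != 0.
Proof.
move=> pz; apply/negP => /eqP z0.
have := prim_expr_order pz; rewrite z0 expr0n.
have := prim_order_gt0 pz; case: d {pz} => // d _ /eqP.
by rewrite eq_sym oner_eq0.
Qed.

Lemma prim_inv d (z : algC) : d.-primitive_root z -> d.-primitive_root z^-1.
Proof.
move=> pz; have d0 := prim_order_gt0 pz; have z0 := prim_neq0 pz.
have -> : z^-1 = z ^+ d.-1.
  apply: (mulfI z0); rewrite mulfV // -exprS prednK //.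
  by rewrite (prim_expr_order pz).
rewrite prim_root_exp_coprime //.
by move: d0 {pz}; case: d => // d _; rewrite /= coprimenS.
Qed.

Lemma sum_pow d (z : algC) e : d.-primitive_root z ->
  \sum_(b < d) (z ^+ b) ^+ e = if (d %| e)%N then d%:R else 0.
Proof.
move=> pz; under eq_bigr do rewrite exprAC.
case: ifP => H.
  move: H; rewrite (prim_order_dvd pz) => /eqP ->.
  by under eq_bigr do rewrite expr1n; rewrite sumr_const card_ord.
set w := z ^+ e.
have w1 : w - 1 != 0 by rewrite subr_eq0 -(prim_order_dvd pz) H.
have := subrX1 w d; rewrite /w exprAC (prim_expr_order pz) expr1n subrr.
by move/esym/eqP; rewrite mulf_eq0 (negPf w1) /= => /eqP.
Qed.

Lemma sum_horner d (z : algC) (Q : {poly algC}) : d.-primitive_root z ->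
  (size Q <= d + d)%N -> \sum_(b < d) Q.[z ^+ b] = d%:R * (Q`_0 + Q`_d).
Proof.
move=> pz HQ.
under eq_bigr do rewrite (horner_coef_wide _ HQ).
rewrite exchange_big /=.
under eq_bigr do rewrite -mulr_sumr (sum_pow _ pz).
case: d pz HQ => [|d] pz HQ; first by have := prim_order_gt0 pz.
rewrite big_split_ord /= !big_ord_recl /= addn0 dvdnn.
have -> : \sum_(i < d) Q`_(bump 0 i) * (if (d.+1 %| bump 0 i)%N then d.+1%:R else 0) = 0.
  apply: big1 => i _; rewrite /bump /= add1n.
  have -> : (d.+1 %| i.+1)%N = false.
    apply/negP => /dvdn_leq; have := ltn_ord i; lia.
  by rewrite mulr0.
have -> : \sum_(i < d) Q`_(d.+1 + bump 0 i) * (if (d.+1 %| d.+1 + bump 0 i)%N then d.+1%:R else 0) = 0.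
  apply: big1 => i _; rewrite /bump /= add1n.
  have -> : (d.+1 %| d.+1 + i.+1)%N = false.
    rewrite dvdn_addr //; apply/negP => /dvdn_leq; have := ltn_ord i; lia.
  by rewrite mulr0.
by ring.
Qed.

Lemma qfact_neq0 d (z : algC) j : d.-primitive_root z -> (j < d)%N -> qfact z j != 0.
Proof.
move=> pz jd; rewrite /qfact; apply/prodf_neq0 => i _.
rewrite subr_eq0 eq_sym -(prim_order_dvd pz); apply/negP => /dvdn_leq.
have := ltn_ord i; lia.
Qed.

Lemma qb_dd d (z : algC) e : d.-primitive_root z -> (0 < e < d)%N -> qbinom z d e = 0.
Proof.
move=> pz /andP [e0 ed].
have := qb_fall z d e.
rewrite (bigD1 (Ordinal e0)) //= subn0 (prim_expr_order pz) subrr mul0r.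
by move/eqP; rewrite mulf_eq0 (negPf (qfact_neq0 pz ed)) orbF => /eqP.
Qed.

Lemma dvdS_mod d m : (0 < d)%N -> (d %| m.+1)%N = ((m %% d).+1 == d).
Proof.
move=> d0; apply/idP/idP => H.
  have H1 : (d %| (m %% d).+1)%N by rewrite /dvdn -addn1 modnDml addn1.
  have := dvdn_leq (ltn0Sn _) H1; have := ltn_pmod m d0.
  by move=> *; apply/eqP; lia.
by rewrite /dvdn -addn1 -modnDml addn1 (eqP H) modnn.
Qed.

Lemma lucas d (z : algC) : d.-primitive_root z -> forall n k,
  qbinom z n k = ('C(n %/ d, k %/ d))%:R * qbinom z (n %% d) (k %% d).
Proof.
move=> pz; have d0 := prim_order_gt0 pz.
elim=> [|n IH] k.
  rewrite div0n mod0n; case: k => [|k]; first by rewrite div0n mod0n bin0 qb_n0 mulr1.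
  rewrite qb_gt //; case E: (k.+1 %/ d)%N => [|c]; last by rewrite bin0n mul0r.
  rewrite qb_gt ?mulr0 //; have := divn_eq k.+1 d; rewrite E; lia.
case: k => [|k]; first by rewrite qb_n0 div0n mod0n bin0 qb_n0 mulr1.
rewrite qb_SS !IH -(prim_expr_mod pz k.+1).
rewrite (modnS n) (divnS n d0) (modnS k) (divnS k d0).
have ltb := ltn_pmod n d0; have lte := ltn_pmod k d0.
rewrite !(dvdS_mod _ d0).
set a := (n %/ d)%N; set b := (n %% d)%N; set c := (k %/ d)%N; set e := (k %% d)%N.
case: (eqVneq b.+1 d) => Hn; case: (eqVneq e.+1 d) => He /=.
all: rewrite ?Hn ?He /=.
- rewrite add1n binS natrD expr0 mul1r qb_n0 mulr1 mulr1.
  have -> : b = e by lia.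
  by rewrite qb_nn mulr1 addrC.
- rewrite add0n mulr0.
  have -> : 'C(a, c)%:R * qbinom z b e + z ^+ e.+1 * ('C(a, c)%:R * qbinom z b e.+1)
    = 'C(a, c)%:R * qbinom z b.+1 e.+1 by rewrite qb_SS; ring.
  by rewrite Hn qb_dd ?mulr0 //; apply/andP; split => //; lia.
- rewrite qb_gt; last by move: Hn He; lia.
  by rewrite mulr0 add0r expr0 mul1r qb_n0 add0n mulr1.
- by rewrite !add0n; ring.
Qed.

Lemma lucas2 d (z : algC) a b c e : d.-primitive_root z -> (b < d)%N -> (e < d)%N ->
  qbinom z (a * d + b) (c * d + e) = ('C(a, c))%:R * qbinom z b e.
Proof.
move=> pz bd ed; have d0 := prim_order_gt0 pz.
by rewrite (lucas pz) !divnMDl // !modnMDl !modn_small // !divn_small // !addn0.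
Qed.

Lemma sum_split (F : nat -> algC) N d :
  \sum_(k < N * d) F k = \sum_(a < N) \sum_(b < d) F (a * d + b)%N.
Proof.
elim: N => [|N IH]; first by rewrite mul0n !big_ord0.
rewrite mulSnr big_split_ord /= IH big_ord_recr /=.
by congr (_ + _).
Qed.

Lemma qint_per d (z : algC) a c : d.-primitive_root z -> (1 < d)%N ->
  qint z (a * d + c) = qint z c.
Proof.
move=> pz d1; have z1 : z - 1 != 0.
  by rewrite subr_eq0 -[z in z == _]expr1 -(prim_order_dvd pz); apply/negP => /dvdn_leq; lia.
apply: (mulfI z1); rewrite /qint -!subrX1.
by rewrite exprD mulnC exprM (prim_expr_order pz) expr1n mul1r.
Qed.

Definition cst (w : algC) j := \prod_(i < j) (- w^-1 ^+ i).
Definition NP (w c : algC) j : {poly algC} := \prod_(i < j) (1 - (w ^+ i * c) *: 'X).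

Lemma hornerNP w c j u : (NP w c j).[u] = \prod_(i < j) (1 - w ^+ i * c * u).
Proof.
rewrite /NP horner_prod; apply: eq_bigr => i _.
by rewrite hornerD hornerN hornerC hornerZ hornerX.
Qed.

Lemma R0 (w : algC) m j : w != 0 ->
  qbinom w m j * qfact w j = (w ^+ m) ^+ j * cst w j * (NP w 1 j).[w^-1 ^+ m].
Proof.
move=> w0; rewrite qb_fall hornerNP /cst.
case: (leqP j m) => H.
  have -> : (w ^+ m) ^+ j = \prod_(i < j) w ^+ m by rewrite prodr_const card_ord.
  rewrite -!big_split /=; apply: eq_bigr => i _.
  have im : (i < m)%N by apply: leq_trans (ltn_ord i) H.
  rewrite (expfB _ im) !exprVn mulr1.
  have wm : w ^+ m != 0 by rewrite expf_neq0.
  have wi : w ^+ i != 0 by rewrite expf_neq0.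
  move: wm wi; set a := w ^+ m; set bb := w ^+ i; move=> wm wi. by field; rewrite wm wi.
rewrite (bigD1 (Ordinal H)) //= subnn expr0 subrr mul0r.
rewrite [X in _ = _ * X](bigD1 (Ordinal H)) //= exprVn mulr1 mulfV ?expf_neq0 //.
by rewrite subrr mul0r mulr0.
Qed.

Lemma pow_inv (w : algC) d b k : d.-primitive_root w -> (k <= d)%N ->
  (w ^+ b) ^+ k = ((w^-1) ^+ b) ^+ (d - k).
Proof.
move=> pw kd; have w0 := prim_neq0 pw.
rewrite !exprVn; set y := w ^+ b.
have y0 : y ^+ (d - k) != 0 by rewrite expf_neq0 // expf_neq0.
apply: (mulIf y0); rewrite mulVf // -exprD subnKC //.
by rewrite /y exprAC (prim_expr_order pw) expr1n.
Qed.

Lemma GenP (w : algC) d (p : {poly algC}) k : d.-primitive_root w -> (k <= d)%N ->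
  (size p <= d + k)%N ->
  \sum_(b < d) (w ^+ b) ^+ k * p.[w^-1 ^+ b] =
  d%:R * ((if (0 < d - k)%N then 0 else p`_0) + p`_k).
Proof.
move=> pw kd sp.
under eq_bigr => b _ do rewrite (pow_inv b pw kd) -hornerXn -hornerM.
rewrite (sum_horner (prim_inv pw)); last first.
  have := size_mul_leq (@GRing.exp {poly algC} (polyX algC) (d - k)) p; rewrite size_polyXn => /leq_trans; apply; lia.
rewrite !coefXnM sub0n subKn //.
have -> : (d < d - k)%N = false by apply/negbTE; rewrite -leqNgt leq_subr.
by [].
Qed.

Lemma size_NP w c j : (size (NP w c j) <= j.+1)%N.
Proof.
elim: j => [|j IH]; first by rewrite /NP big_ord0 size_poly1.
rewrite /NP big_ord_recr /= -/(NP w c j).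
have := size_mul_leq (NP w c j) (1 - (w ^+ j * c) *: 'X).
have : (size ((1 - (w ^+ j * c) *: 'X)%R : {poly algC}) <= 2)%N.
  apply: leq_trans (size_polyD _ _) _; rewrite size_polyN size_poly1 geq_max /=.
  by apply: leq_trans (size_scale_leq _ _) _; rewrite size_polyX.
move=> H2 /leq_trans; apply; lia.
Qed.

Lemma coef_NP w c j : (NP w c j)`_0 = 1 /\ (NP w c j)`_1 = - \sum_(i < j) w ^+ i * c.
Proof.
elim: j => [|j [IH0 IH1]]; first by rewrite /NP big_ord0 !coef1 big_ord0 oppr0.
rewrite /NP big_ord_recr /= -/(NP w c j); split.
  by rewrite coef0M IH0 coefB coef1 coefZ coefX /= mulr0 subr0 mulr1.
rewrite mulrBr mulr1 coefB -scalerAr coefZ coefMX /= IH1 IH0 big_ord_recr /=.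
by ring.
Qed.

Lemma sq_term (w : algC) b j k : w != 0 ->
  (w ^+ b) ^+ k * (qbinom w b j * qfact w j) ^+ 2 =
  cst w j ^+ 2 * ((w ^+ b) ^+ (k + j + j) * ((NP w 1 j) ^+ 2).[w^-1 ^+ b]).
Proof.
move=> w0; rewrite R0 // horner_exp !exprD.
set A := w ^+ b; set B := (NP w 1 j).[_]; ring.
Qed.

Lemma size_NP2 (w : algC) j : (size ((NP w 1 j) ^+ 2)%R <= j + j + 1)%N.
Proof.
rewrite expr2; have := size_mul_leq (NP w 1 j) (NP w 1 j).
move/leq_trans; apply; have := size_NP w 1 j; lia.
Qed.

Lemma sum_sq_factor (w : algC) d j k :
  \sum_(b < d) (w ^+ b) ^+ k * (qbinom w b j * qfact w j) ^+ 2 =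
  (\sum_(b < d) (w ^+ b) ^+ k * qbinom w b j ^+ 2) * qfact w j ^+ 2.
Proof. by rewrite mulr_suml; apply: eq_bigr => b _; rewrite exprMn mulrA. Qed.

Lemma block_sq0 (w : algC) d j k : d.-primitive_root w -> (0 < k)%N -> (k + j + j < d)%N ->
  \sum_(b < d) (w ^+ b) ^+ k * qbinom w b j ^+ 2 = 0.
Proof.
move=> pw k0 kd; have w0 := prim_neq0 pw.
have qf : qfact w j ^+ 2 != 0 by rewrite expf_neq0 // (qfact_neq0 pw); lia.
apply/eqP; rewrite -(mulIr_eq0 _ (mulIf qf)) -sum_sq_factor.
under eq_bigr => b _ do rewrite (sq_term _ _ _ w0).
rewrite -mulr_sumr (GenP pw); last 2 first.
- lia.
- apply: leq_trans (size_NP2 w j) _; lia.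
have -> : (0 < d - (k + j + j))%N by lia.
rewrite nth_default ?addr0 ?mulr0 //.
apply: leq_trans (size_NP2 w j) _; lia.
Qed.

Lemma coefNP2 (w : algC) j : ((NP w 1 j) ^+ 2)`_0 = 1 /\
  ((NP w 1 j) ^+ 2)`_1 = 2 * (NP w 1 j)`_1.
Proof.
have [c0 _] := coef_NP w 1 j.
rewrite expr2 coef0M c0 mulr1; split => //.
rewrite coefM big_ord_recr big_ord1 /= c0; ring.
Qed.

Lemma block_U (w : algC) d j : d.-primitive_root w -> d = (j + j + 1)%N ->
  \sum_(b < d) (w ^+ b) ^+ 1 * (qbinom w b j * qfact w j) ^+ 2 = cst w j ^+ 2 * d%:R.
Proof.
move=> pw dE; have w0 := prim_neq0 pw.
under eq_bigr => b _ do rewrite (sq_term _ _ _ w0).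
rewrite -mulr_sumr (GenP pw); last 2 first.
- lia.
- apply: leq_trans (size_NP2 w j) _; lia.
have -> : (0 < d - (1 + j + j))%N = false by apply/negbTE; lia.
have [-> _] := coefNP2 w j.
rewrite nth_default ?addr0 ?mulr1 //.
apply: leq_trans (size_NP2 w j) _; lia.
Qed.

Lemma block_W (w : algC) d j : d.-primitive_root w -> d = (j + j + 1)%N -> (1 < d)%N ->
  \sum_(b < d) (w ^+ b) ^+ 2 * (qbinom w b j * qfact w j) ^+ 2 =
  cst w j ^+ 2 * (d%:R * (2 * (NP w 1 j)`_1)).
Proof.
move=> pw dE d1; have w0 := prim_neq0 pw.
under eq_bigr => b _ do rewrite (sq_term _ _ _ w0).
have Ex : forall b : nat, (w ^+ b) ^+ (2 + j + j) = (w ^+ b) ^+ 1.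
  move=> b; rewrite (_ : (2 + j + j) = 1 + d)%N; last by lia.
  by rewrite exprD [X in _ * X]exprAC (prim_expr_order pw) expr1n mulr1.
under eq_bigr => b _ do rewrite Ex.
rewrite -mulr_sumr (GenP pw); last 2 first.
- lia.
- apply: leq_trans (size_NP2 w j) _; lia.
have -> : (0 < d - 1)%N by lia.
have [_ ->] := coefNP2 w j.
by rewrite add0r.
Qed.

Lemma block3 (w : algC) d j : d.-primitive_root w -> (j + j + 2 < d)%N ->
  \sum_(b < d) w ^+ b * (qbinom w b j * qbinom w b.+1 j.+1) = 0.
Proof.
move=> pw jd; have w0 := prim_neq0 pw.
have qf1 : qfact w j != 0 by rewrite (qfact_neq0 pw); lia.
have qf2 : qfact w j.+1 != 0 by rewrite (qfact_neq0 pw); lia.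
have qf : qfact w j * qfact w j.+1 != 0 by rewrite mulf_neq0.
apply/eqP; rewrite -(mulIr_eq0 _ (mulIf qf)) mulr_suml.
have T : forall b : nat, w ^+ b * (qbinom w b j * qbinom w b.+1 j.+1) * (qfact w j * qfact w j.+1)
  = cst w j * cst w j.+1 * w ^+ j.+1 *
    ((w ^+ b) ^+ (1 + j + j.+1) * (NP w 1 j * NP w w^-1 j.+1).[w^-1 ^+ b]).
  move=> b.
  have E1 := R0 b j w0; have E2 := R0 b.+1 j.+1 w0.
  have E3 : (NP w 1 j.+1).[w^-1 ^+ b.+1] = (NP w w^-1 j.+1).[w^-1 ^+ b].
    by rewrite !hornerNP; apply: eq_bigr => i _; rewrite exprS mulr1 mulrA.
  have E4 : (w ^+ b.+1) ^+ j.+1 = w ^+ j.+1 * (w ^+ b) ^+ j.+1.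
    by rewrite [w ^+ b.+1]exprS exprMn.
  rewrite E3 E4 in E2.
  transitivity (w ^+ b * ((qbinom w b j * qfact w j) * (qbinom w b.+1 j.+1 * qfact w j.+1))).
    by ring.
  rewrite E1 E2 hornerM !exprD expr1.
  set A := w ^+ b; set B := (NP w 1 j).[_]; set C := (NP w w^-1 j.+1).[_]; ring.
under eq_bigr => b _ do rewrite T.
rewrite -mulr_sumr (GenP pw); last 2 first.
- lia.
- have := size_mul_leq (NP w 1 j) (NP w w^-1 j.+1).
  move/leq_trans; apply; have := size_NP w 1 j; have := size_NP w w^-1 j.+1; lia.
have -> : (0 < d - (1 + j + j.+1))%N by lia.
rewrite nth_default ?addr0 ?mulr0 //.
have := size_mul_leq (NP w 1 j) (NP w w^-1 j.+1).
move/leq_trans; apply; have := size_NP w 1 j; have := size_NP w w^-1 j.+1; lia.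
Qed.

Lemma zpow_per d (z : algC) a b : d.-primitive_root z -> z ^+ (a * d + b) = z ^+ b.
Proof. by move=> pz; rewrite exprD mulnC exprM (prim_expr_order pz) expr1n mul1r. Qed.

Lemma qb2_zero d (z : algC) i : d.-primitive_root z -> (d <= (i %% d).*2)%N ->
  qbinom z i.*2 i = 0.
Proof.
move=> pz H; have d0 := prim_order_gt0 pz.
have lt := ltn_pmod i d0.
have Hm : (i.*2 %% d < i %% d)%N.
  have E2 : i.*2 = ((i %/ d).*2.+1 * d + ((i %% d).*2 - d))%N.
    have := divn_eq i d; nia.
  rewrite E2 modnMDl modn_small; lia.
by rewrite (lucas pz) (qb_gt _ Hm) mulr0.
Qed.

Lemma core2 d (z : algC) n i : d.-primitive_root z -> (d %| n)%N -> ~~ odd d ->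
  \sum_(k < n) z ^+ k * (qbinom z k i * qbinom z k i * qbinom z i.*2 i) = 0.
Proof.
move=> pz dn dev; have d0 := prim_order_gt0 pz.
have lt := ltn_pmod i d0.
rewrite -(divnK dn) (sum_split (fun k => z ^+ k * (qbinom z k i * qbinom z k i * qbinom z i.*2 i))).
case: (leqP d (i %% d).*2) => Hi.
  apply: big1 => a _; apply: big1 => b _.
  by rewrite (qb2_zero pz Hi) !mulr0.
apply: big1 => a _.
have iE : i = (i %/ d * d + i %% d)%N by apply: divn_eq.
rewrite (eq_bigr (fun b : 'I_d => ('C(a, i %/ d))%:R ^+ 2 * qbinom z i.*2 i *
   ((z ^+ b) ^+ 1 * qbinom z b (i %% d) ^+ 2))); last first.
  move=> b _; rewrite (zpow_per _ _ pz) {1 2}iE (lucas2 _ _ pz) //.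
  by rewrite expr1; ring.
rewrite -mulr_sumr (block_sq0 pz).
- by rewrite mulr0.
- by [].
have : ((i %% d).*2).+1 != d by apply/negP => /eqP E; move: dev; rewrite -E /= odd_double.
lia.
Qed.

Lemma core3 d (z : algC) n i : d.-primitive_root z -> (d %| n)%N -> (2 < d)%N -> ~~ odd d ->
  (i < n)%N ->
  qint (z ^+ 2) i.+1 * qbinom z i.*2 i *
    \sum_(i <= k < n) z ^+ k * qbinom z k i * qbinom z k.+1 i.+1 = 0.
Proof.
move=> pz dn d2 dev iN; have d0 := prim_order_gt0 pz.
have lt := ltn_pmod i d0.
set F := fun k => z ^+ k * qbinom z k i * qbinom z k.+1 i.+1.
have Sext : \sum_(i <= k < n) F k = \sum_(k < n) F k.
  rewrite -(big_mkord xpredT F) (big_cat_nat (leq0n i) (ltnW iN)) /=.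
  rewrite [X in _ = X + _]big_nat_cond [X in _ = X + _]big1 ?add0r // => k /andP [/andP [_ ki] _].
  by rewrite /F qb_gt // mulr0 mul0r.
rewrite Sext.
case: (leqP d (i %% d).*2) => Hi.
  by rewrite (qb2_zero pz Hi) mulr0 mul0r.
case: (eqVneq ((i %% d).*2).+2 d) => He.
  have Q0 : qint (z ^+ 2) i.+1 = 0.
    have z21 : z ^+ 2 - 1 != 0.
      by rewrite subr_eq0 -(prim_order_dvd pz); apply/negP => /dvdn_leq; lia.
    apply: (mulfI z21); rewrite mulr0 /qint -subrX1 -exprM.
    have -> : (2 * i.+1)%N = ((i %/ d).*2.+1 * d)%N by have := divn_eq i d; nia.
    by rewrite mulnC exprM (prim_expr_order pz) expr1n subrr.
  by rewrite Q0 !mul0r.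
have Hj : (i %% d + i %% d + 2 < d)%N.
  have : ((i %% d).*2).+1 != d by apply/negP => /eqP E; move: dev; rewrite -E /= odd_double.
  move: He Hi; lia.
rewrite -(divnK dn) (sum_split F) big1 ?mulr0 // => a _.
set i1 := (i %/ d)%N; set i0 := (i %% d)%N.
have iE : i = (i1 * d + i0)%N by apply: divn_eq.
have i0d : (i0.+1 < d)%N by rewrite /i0; lia.
rewrite (eq_bigr (fun b : 'I_d => ('C(a, i1))%:R ^+ 2 *
   (z ^+ b * (qbinom z b i0 * qbinom z b.+1 i0.+1)))); last first.
  move=> b _; rewrite /F (zpow_per _ _ pz).
  have L1 : qbinom z (a * d + b) (i1 * d + i0) = ('C(a, i1))%:R * qbinom z b i0.
    by rewrite (lucas2 _ _ pz).
  have L2 : qbinom z (a * d + b).+1 (i1 * d + i0).+1 = ('C(a, i1))%:R * qbinom z b.+1 i0.+1.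
    rewrite -!addnS; case: (ltnP b.+1 d) => Hb.
      by rewrite (lucas2 _ _ pz).
    have bE : b.+1 = d by have := ltn_ord b; lia.
    rewrite (_ : (a * d + b.+1 = a.+1 * d + 0)%N); last by rewrite bE mulSn addnC addn0.
    rewrite (lucas2 _ _ pz) // [qbinom z 0 _]qb_gt // mulr0 bE (qb_dd pz) ?mulr0 //; lia.
  rewrite -iE in L1 L2; rewrite L1 L2; ring.
by rewrite -mulr_sumr (block3 pz Hj) mulr0.
Qed.

Lemma Kid (z : algC) d h : d.-primitive_root z -> d = (h + h + 1)%N -> (1 < d)%N ->
  (1 + z) ^+ 2 * (1 + 2 * (z ^+ 2 * \sum_(i < h) (z ^+ 2) ^+ i * 1)) = 1 - z ^+ 2.
Proof.
move=> pz dE d1; have d0 := prim_order_gt0 pz.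
under eq_bigr do rewrite mulr1.
have S2 : forall m, (1 + z) * \sum_(i < m) (z ^+ 2) ^+ i = \sum_(e < m + m) z ^+ e.
  elim=> [|m IH]; first by rewrite !big_ord0 mulr0.
  rewrite addSn addnS !big_ord_recr /= mulrDr IH.
  have -> : (z ^+ 2) ^+ m = z ^+ (m + m) by rewrite -exprM mul2n addnn.
  rewrite exprS; ring.
have S0 : \sum_(e < h + h) z ^+ e = - z ^+ (h + h).
  have := sum_pow 1 pz; rewrite dvdn1.
  have -> : (d == 1%N) = false by apply/negbTE; lia.
  rewrite dE addn1 big_ord_recr /=; under eq_bigr do rewrite expr1.
  by rewrite expr1 => /eqP; rewrite addr_eq0 => /eqP.
have Zd : z ^+ (h + h) * z ^+ 2 = z.
  by rewrite -exprD (_ : (h + h + 2 = 1 + d)%N) ?exprD ?(prim_expr_order pz) ?mulr1 ?expr1 //; lia.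
transitivity ((1 + z) * ((1 + z) + 2 * z ^+ 2 * ((1 + z) * \sum_(i < h) (z ^+ 2) ^+ i))); first by ring.
rewrite S2 S0.
transitivity ((1 + z) * ((1 + z) - 2 * (z ^+ (h + h) * z ^+ 2))); first by ring.
by rewrite Zd; ring.
Qed.

Lemma BI (z : algC) d j : d.-primitive_root z -> (1 < d)%N -> odd d -> (j + j < d)%N ->
  (1 + z) ^+ 2 * \sum_(b < d) (z ^+ 2) ^+ b * qint (z ^+ 2) b.+1 * qbinom (z ^+ 2) b j ^+ 2
  = \sum_(b < d) (z ^+ 2) ^+ b * qbinom (z ^+ 2) b j ^+ 2.
Proof.
move=> pz d1 dodd jd.
have pw : d.-primitive_root (z ^+ 2) by rewrite prim_root_exp_coprime // coprime2n.
set w := z ^+ 2 in pw *.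
have w1 : w - 1 != 0.
  by rewrite subr_eq0 -[w in w == _]expr1 -(prim_order_dvd pw); apply/negP => /dvdn_leq; lia.
set SV := \sum_(b < d) w ^+ b * qint w b.+1 * qbinom w b j ^+ 2.
set U0 := \sum_(b < d) (w ^+ b) ^+ 1 * qbinom w b j ^+ 2.
set W0 := \sum_(b < d) (w ^+ b) ^+ 2 * qbinom w b j ^+ 2.
have HV : (w - 1) * SV = w * W0 - U0.
  rewrite /SV /W0 /U0 !mulr_sumr -sumrB; apply: eq_bigr => b _.
  have E : (w - 1) * qint w b.+1 = w ^+ b.+1 - 1 by rewrite /qint -subrX1.
  transitivity (w ^+ b * ((w - 1) * qint w b.+1) * qbinom w b j ^+ 2); first by ring.
  by rewrite E exprS; ring.
have SU : \sum_(b < d) w ^+ b * qbinom w b j ^+ 2 = U0.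
  by apply: eq_bigr => b _; rewrite expr1.
case: (ltnP (j + j + 1) d) => Hd.
  have U00 : U0 = 0 by apply: (block_sq0 pw) => //; lia.
  have W00 : W0 = 0.
    apply: (block_sq0 pw) => //.
    have : (j + j + 2 != d)%N by apply/negP => /eqP E; move: dodd; rewrite -E addn2 /= addnn odd_double.
    lia.
  move: HV; rewrite U00 W00 mulr0 subrr => /eqP; rewrite mulf_eq0 (negPf w1) /= => /eqP ->.
  by rewrite mulr0.
have dE : d = (j + j + 1)%N by lia.
have qf : qfact w j != 0 by rewrite (qfact_neq0 pw); lia.
have nz : (w - 1) * qfact w j ^+ 2 != 0 by rewrite mulf_neq0 // expf_neq0.
have HU := block_U pw dE; rewrite sum_sq_factor -/U0 in HU.
have HW := block_W pw dE d1; rewrite sum_sq_factor -/W0 in HW.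
have [_ NP1] := coef_NP w 1 j.
rewrite NP1 in HW.
apply: (mulIf nz).
transitivity ((1 + z) ^+ 2 * (w * (W0 * qfact w j ^+ 2) - U0 * qfact w j ^+ 2)).
  transitivity ((1 + z) ^+ 2 * ((w - 1) * SV) * qfact w j ^+ 2); first by ring.
  by rewrite HV; ring.
rewrite HW HU.
transitivity (- (cst w j ^+ 2 * d%:R) *
   ((1 + z) ^+ 2 * (1 + 2 * (w * \sum_(i < j) w ^+ i * 1)))); first by ring.
rewrite (Kid pz dE d1).
transitivity ((U0 * qfact w j ^+ 2) * (w - 1)); last by ring.
by rewrite HU /w; ring.
Qed.

Lemma core1 d (z : algC) n i : d.-primitive_root z -> (d %| n)%N -> (1 < d)%N -> odd d ->
  (1 + z) ^+ 2 * \sum_(k < n) z ^+ 2 ^+ k * qint (z ^+ 2) k.+1 *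
     (qbinom (z ^+ 2) k i * qbinom (z ^+ 2) k i * qbinom (z ^+ 2) i.*2 i) -
  \sum_(k < n) z ^+ 2 ^+ k * (qbinom (z ^+ 2) k i * qbinom (z ^+ 2) k i * qbinom (z ^+ 2) i.*2 i) = 0.
Proof.
move=> pz dn d1 dodd; have d0 := prim_order_gt0 pz.
have pw : d.-primitive_root (z ^+ 2) by rewrite prim_root_exp_coprime // coprime2n.
have lt := ltn_pmod i d0.
rewrite -(divnK dn).
rewrite (sum_split (fun k => z ^+ 2 ^+ k * qint (z ^+ 2) k.+1 *
     (qbinom (z ^+ 2) k i * qbinom (z ^+ 2) k i * qbinom (z ^+ 2) i.*2 i))).
rewrite (sum_split (fun k => z ^+ 2 ^+ k *
     (qbinom (z ^+ 2) k i * qbinom (z ^+ 2) k i * qbinom (z ^+ 2) i.*2 i))).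
case: (leqP d (i %% d).*2) => Hi.
  rewrite !big1 ?mulr0 ?subrr // => a _; apply: big1 => b _;
  by rewrite (qb2_zero pw Hi) !mulr0.
set i1 := (i %/ d)%N; set i0 := (i %% d)%N.
have iE : i = (i1 * d + i0)%N by apply: divn_eq.
have L1 : forall a b : nat, (b < d)%N ->
    qbinom (z ^+ 2) (a * d + b) i = ('C(a, i1))%:R * qbinom (z ^+ 2) b i0.
  by move=> a b bd; rewrite {1}iE (lucas2 _ _ pw).
set Q := qbinom (z ^+ 2) i.*2 i.
rewrite mulr_sumr -sumrB big1 // => a _.
rewrite (eq_bigr (fun b : 'I_d => ('C(a, i1))%:R ^+ 2 * Q *
   (z ^+ 2 ^+ b * qint (z ^+ 2) b.+1 * qbinom (z ^+ 2) b i0 ^+ 2))); last first.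
  move=> b _; rewrite (zpow_per _ _ pw) L1 // -addnS (qint_per _ _ pw d1); ring.
rewrite [X in _ - X](eq_bigr (fun b : 'I_d => ('C(a, i1))%:R ^+ 2 * Q *
   (z ^+ 2 ^+ b * qbinom (z ^+ 2) b i0 ^+ 2))); last first.
  move=> b _; rewrite (zpow_per _ _ pw) L1 //; ring.
rewrite -!mulr_sumr -(BI pz d1 dodd); first by ring.
rewrite /i0; lia.
Qed.

Lemma gSun_coef (p : {poly int}) k i :
  (gSun p k)`_i = qbinom p k i ^+ 2 * qbinom p i.*2 i.
Proof.
rewrite /gSun.
have -> : \sum_(j < k.+1) (qbinom p k j ^+ 2 * qbinom p j.*2 j)%:P * 'X^j =
  \poly_(j < k.+1) (qbinom p k j ^+ 2 * qbinom p j.*2 j).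
  by rewrite poly_def; apply: eq_bigr => j _; rewrite mul_polyC.
rewrite coef_poly; case: ltnP => // H.
by rewrite qb_gt ?expr0n ?mul0r.
Qed.

Lemma cfu (z : algC) : commr_rmorph (intr : int -> algC) z.
Proof. by move=> a; rewrite /GRing.comm mulrC. Qed.

Definition hm (z : algC) : {rmorphism {poly int} -> algC} := horner_morph (cfu z).

Lemma hmX (z : algC) : hm z 'X = z.
Proof. exact: horner_morphX. Qed.

Lemma evE (z : algC) (p : {poly int}) : (map_poly intr p).[z] = hm z p.
Proof. by []. Qed.

Unset Implicit Arguments.

Theorem theorem5 (n : nat) : (0 < n)%N ->
  let q : {poly int} := 'X in
  let x : {poly {poly int}} := 'X in
  [/\
   pcongr (\prod_(d <- divisors n | (1 < d)%N && odd d) 'Phi_d)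
     (((1 + q) ^+ 2)%:P *
        \sum_(k < n) ((q ^+ 2) ^+ k * qint (q ^+ 2) k.+1)%:P * gSun (q ^+ 2) k)
     (\sum_(k < n) ((q ^+ 2) ^+ k)%:P * gSun (q ^+ 2) k),
   pcongr (\prod_(d <- divisors n | ~~ odd d) 'Phi_d)
     (\sum_(k < n) (q ^+ k)%:P * gSun q k) 0
 & pcongr (\prod_(d <- divisors n | (2 < d)%N && ~~ odd d) 'Phi_d)
     (\sum_(j < n) x ^+ j *
        (qint (q ^+ 2) j.+1 * qbinom q j.*2 j *
         \sum_(j <= k < n) q ^+ k * qbinom q k j * qbinom q k.+1 j.+1)%:P)
     0].
Proof.
move=> n0; cbv zeta; split => i.
- rewrite coefCM !coef_sum.
  rewrite (eq_bigr (fun k : 'I_n => ('X^2 ^+ k * qint 'X^2 k.+1) * (qbinom 'X^2 k i ^+ 2 * qbinom 'X^2 i.*2 i))); last first.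
    by move=> k _; rewrite coefCM gSun_coef.
  rewrite [X in _ - X](eq_bigr (fun k : 'I_n => ('X^2 ^+ k) * (qbinom 'X^2 k i ^+ 2 * qbinom 'X^2 i.*2 i))); last first.
    by move=> k _; rewrite coefCM gSun_coef.
  eapply (@transfer (fun d => (1 < d)%N && odd d) n _ n0) => d z dn /andP [d1 dodd] pz.
  rewrite evE rmorphB rmorphM !rmorph_sum /=.
  under [X in _ * X - _]eq_bigr do rewrite ?rmorphM ?rmorph_qbinom ?rmorph_qint ?rmorphXn ?hmX.
  under [X in _ - X]eq_bigr do rewrite ?rmorphM ?rmorph_qbinom ?rmorph_qint ?rmorphXn ?hmX.
  rewrite rmorphXn rmorphD rmorph1 hmX.
  exact: core1 pz dn d1 dodd.
- rewrite coef0 subr0 coef_sum.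
  rewrite (eq_bigr (fun k : 'I_n => 'X^k * (qbinom 'X k i ^+ 2 * qbinom 'X i.*2 i))); last first.
    by move=> k _; rewrite coefCM gSun_coef.
  eapply (@transfer (fun d => ~~ odd d) n _ n0) => d z dn dev pz.
  rewrite evE rmorph_sum /=.
  under eq_bigr do rewrite ?rmorphM ?rmorph_qbinom ?rmorph_qint ?rmorphXn ?hmX.
  exact: core2 pz dn dev.
- rewrite coef0 subr0.
  have -> : \sum_(j < n) ('X^j : {poly {poly int}}) * (qint 'X^2 j.+1 * qbinom 'X j.*2 j *
        \sum_(j <= k < n) 'X^k * qbinom 'X k j * qbinom 'X k.+1 j.+1)%:P =
     \poly_(j < n) (qint ('X^2 : {poly int}) j.+1 * qbinom 'X j.*2 j *
        \sum_(j <= k < n) 'X^k * qbinom 'X k j * qbinom 'X k.+1 j.+1).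
    by rewrite poly_def; apply: eq_bigr => j _; rewrite mulrC mul_polyC.
  rewrite coef_poly; case: ltnP => iN; last by exists 0; rewrite mul0r.
  eapply (@transfer (fun d => (2 < d)%N && ~~ odd d) n _ n0) => d z dn /andP [d2 dev] pz.
  rewrite evE !rmorphM rmorph_qint rmorph_qbinom rmorph_sum ?rmorphXn ?hmX.
  under eq_bigr do rewrite ?rmorphM ?rmorph_qbinom ?rmorph_qint ?rmorphXn ?hmX.
  exact: core3 pz dn d2 dev iN.
Qed.
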